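(* Let $(\mathfrak g,\mu,P)$ be a Nijenhuis Lie algebra and $(M,P_M)$ a Nijenhuis representation over it, and let $\iota:\mathrm C^\bullet_{\mathrm{NjL}}(\mathfrak g,M)\hookrightarrow\mathrm C^\bullet_{\mathrm{NjL}}(\mathfrak g\ltimes M)$ be the embedding described below. Then the image $\mathrm{Im}(\iota)$ is a subcomplex of $(\mathrm C^\bullet_{\mathrm{NjL}}(\mathfrak g\ltimes M),\delta_{\mathrm{NjL}})$.
   Context: All vector spaces are over a field $\mathbf k$ of characteristic $0$. A Nijenhuis Lie algebra is a Lie algebra $(\mathfrak g,\mu=[-,-]_\mu)$ with linear $P$ satisfying $[Pa,Pb]_\mu=P([Pa,b]_\mu+[a,Pb]_\mu-P[a,b]_\mu)$; a Nijenhuis representation is a representation $M$ of $(\mathfrak g,\mu)$ with linear $P_M$ such that $P(a)P_M(x)=P_M(P(a)x+aP_M(x)-P_M(ax))$. The semidirect product $\mathfrak g\ltimes M$ is $\mathfrak g\oplus M$ with bracket $[(a,x),(b,y)]=([a,b]_\mu,ay-bx)$; with the operator $P\oplus P_M$ it is a Nijenhuis Lie algebra (and hence a Nijenhuis representation over itself via the adjoint action). For a Nijenhuis Lie algebra $\mathfrak h$ with Nijenhuis representation $N$ define: $\mathrm C^n_{\mathrm{Lie}}(\mathfrak h,N)=\mathrm{Hom}(\wedge^n\mathfrak h,N)$ with Chevalley–Eilenberg differential $\delta_{\mathrm{Lie},N}(f)(a_1,\dots,a_{n+1})=\sum_i(-1)^{i-1}a_if(\dots,\widehat{a_i},\dots)+\sum_{i<j}(-1)^{i+j}f([a_i,a_j],\dots,\widehat{a_i},\dots,\widehat{a_j},\dots)$;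 $\mathrm C^n_{\mathrm{NjO}}(\mathfrak h,N)=\mathrm{Hom}(\wedge^n\mathfrak h,N)$ with $\delta_{\mathrm{NjO},N}(f)=-P_N\circ\delta_{\mathrm{Lie},N}(f)+\partial(f)$, where $\partial(f)(a_1,\dots,a_{n+1})=\sum_i(-1)^{i-1}P(a_i)f(\dots,\widehat{a_i},\dots)+\sum_{i<j}(-1)^{i+j}f([a_i,a_j]_P,\dots,\widehat{a_i},\dots,\widehat{a_j},\dots)$ and $[a,b]_P=[Pa,b]+[a,Pb]-P[a,b]$; $\Psi_N:\mathrm C^\bullet_{\mathrm{Lie}}\to\mathrm C^\bullet_{\mathrm{NjO}}$ is $\mathrm{Id}_N$ in degree $0$ and $\Psi_N(f)(a_1,\dots,a_n)=\sum_{k=0}^n\sum_{i_1<\dots<i_k}(-1)^{n-k}P_N^{n-k}f(a_1,\dots,Pa_{i_1},\dots,Pa_{i_k},\dots,a_n)$. The complex $\mathrm C^\bullet_{\mathrm{NjL}}(\mathfrak h,N)$ has $\mathrm C^0_{\mathrm{NjL}}=\mathrm C^0_{\mathrm{Lie}}(\mathfrak h,N)$, $\mathrm C^n_{\mathrm{NjL}}=\mathrm C^n_{\mathrm{Lie}}(\mathfrak h,N)\oplus\mathrm C^{n-1}_{\mathrm{NjO}}(\mathfrak h,N)$ for $n\ge1$, and $\delta_{\mathrm{NjL},N}(f,g)=(\delta_{\mathrm{Lie},N}(f),-\Psi_N(f)-\delta_{\mathrm{NjO},N}(g))$. $\mathrm C^\bullet_{\mathrm{NjL}}(\mathfrak g\ltimes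 M)$ with differential $\delta_{\mathrm{NjL}}$ denotes this complex for $\mathfrak h=N=\mathfrak g\ltimes M$ (adjoint). The embedding $\iota$ sends a map $f:\wedge^n\mathfrak g\to M$ to $\bar f:\wedge^n(\mathfrak g\oplus M)\to\mathfrak g\oplus M$, $\bar f((a_1,x_1),\dots,(a_n,x_n))=(0,f(a_1,\dots,a_n))$ (for $n=0$, $m\in M\mapsto(0,m)$), and $\iota(f,g)=(\bar f,\bar g)$. *)

(* Defs.v *)
From HB Require Import structures.
From mathcomp Require Import all_boot all_algebra.
Set Implicit Arguments. Unset Strict Implicit. Unset Printing Implicit Defensive.
Import GRing.Theory.
Local Open Scope ring_scope.

Section Generic.
Variables (k : fieldType).

Definition is_linear (V W : lmodType k) (f : V -> W) :=
  forall (c : k) (x y : V), f (c *: x + y) = c *: f x + f y.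

Definition is_bilinear (U V W : lmodType k) (b : U -> V -> W) :=
  (forall y, is_linear (fun x => b x y)) /\ (forall x, is_linear (b x)).

Definition is_Lie (G : lmodType k) (br : G -> G -> G) :=
  [/\ is_bilinear br, (forall a, br a a = 0) &
      (forall a b c, br a (br b c) + br b (br c a) + br c (br a b) = 0)].

Definition is_rep (G M : lmodType k) (br : G -> G -> G) (act : G -> M -> M) :=
  is_bilinear act /\
  (forall a b x, act (br a b) x = act a (act b x) - act b (act a x)).

Definition brP (G : lmodType k) (br : G -> G -> G) (P : G -> G) a b :=
  br (P a) b + br a (P b) - P (br a b).

Definition is_Nijenhuis (G : lmodType k) (br : G -> G -> G) (P : G -> G) :=
  is_linear P /\ forall a b, br (P a) (P b) = P (brP br P a b).

Definition is_Nijenhuis_rep (G M : lmodType k) (act : G -> M -> M)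
    (P : G -> G) (PM : M -> M) :=
  is_linear PM /\
  forall a x, act (P a) (PM x) = PM (act (P a) x + act a (PM x) - PM (act a x)).

(** Cochains: maps Hom(wedge^n H, N), represented as multilinear alternating
    maps on n-families of arguments indexed by 'I_n. *)
Definition cochain (H N : lmodType k) (n : nat) := ('I_n -> H) -> N.

Definition upd (H : lmodType k) n (a : 'I_n -> H) (i : 'I_n) (v : H) : 'I_n -> H :=
  fun j => if j == i then v else a j.

Definition is_cochain (H N : lmodType k) n (f : cochain H N n) :=
  (forall a i, is_linear (fun v => f (upd a i v))) /\
  (forall a (i j : 'I_n), i != j -> a i = a j -> f a = 0).

(* arguments from a list (default 0 beyond its length) *)
Definition args (H : lmodType k) n (s : seq H) : 'I_n -> H := fun i => nth 0 s i.

Variables (H N : lmodType k).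

(** Chevalley-Eilenberg differential (0-indexed signs). *)
Definition dLie (br : H -> H -> H) (act : H -> N -> N) n (f : cochain H N n)
  : cochain H N n.+1 := fun a =>
  \sum_(i < n.+1) (-1) ^+ i *:
      act (a i) (f (args (n:=n) [seq a l | l <- enum 'I_n.+1 & l != i]))
  + \sum_(i < n.+1) \sum_(j < n.+1 | (i < j)%N) (-1) ^+ (i + j) *:
      f (args (n:=n) (br (a i) (a j) ::
                 [seq a l | l <- enum 'I_n.+1 & (l != i) && (l != j)])).

Definition dpartial (br : H -> H -> H) (P : H -> H) (act : H -> N -> N) n
  (f : cochain H N n) : cochain H N n.+1 :=
  dLie (brP br P) (fun a x => act (P a) x) f.

Definition dNjO (br : H -> H -> H) (P : H -> H) (act : H -> N -> N)
  (PN : N -> N) n (f : cochain H N n) : cochain H N n.+1 :=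
  fun a => - PN (dLie br act f a) + dpartial br P act f a.

Definition PsiN (P : H -> H) (PN : N -> N) n (f : cochain H N n)
  : cochain H N n := fun a =>
  \sum_(S : {set 'I_n}) (-1) ^+ (n - #|S|) *:
     iter (n - #|S|) PN (f (fun i => if i \in S then P (a i) else a i)).

(** NjL differential.  C^0_NjL = C^0_Lie; C^{m+1}_NjL = C^{m+1}_Lie (+) C^m_NjO. *)
Definition dNjL0 (br : H -> H -> H) (P : H -> H) (act : H -> N -> N)
  (PN : N -> N) (f : cochain H N 0) : cochain H N 1 * cochain H N 0 :=
  (dLie br act f, fun a => - PsiN P PN f a).

Definition dNjLS (br : H -> H -> H) (P : H -> H) (act : H -> N -> N)
  (PN : N -> N) m (fg : cochain H N m.+1 * cochain H N m)
  : cochain H N m.+2 * cochain H N m.+1 :=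
  (dLie br act fg.1, fun a => - PsiN P PN fg.1 a - dNjO br P act PN fg.2 a).

End Generic.

(** Semidirect product g |x M on G * M, with operator P (+) P_M. *)
Section Semidirect.
Variables (k : fieldType) (G M : lmodType k).
Variables (br : G -> G -> G) (act : G -> M -> M) (P : G -> G) (PM : M -> M).

Definition sd_br (u v : G * M) : G * M :=
  (br u.1 v.1, act u.1 v.2 - act v.1 u.2).
Definition sd_P (u : G * M) : G * M := (P u.1, PM u.2).

Definition iota_c n (f : cochain G M n) : cochain (G * M)%type (G * M)%type n :=
  fun a => (0, f (fun i => (a i).1)).
End Semidirect.

(* Main.v *)
Require Import Defs.
From mathcomp Require Import all_boot all_algebra.
From Stdlib Require Import FunctionalExtensionality.
From mathcomp Require Import zify.
Set Implicit Arguments. Unset Strict Implicit. Unset Printing Implicit Defensive.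
Import GRing.Theory.
Local Open Scope ring_scope.

Section Gen.
Variable k : fieldType.

Lemma lin_add (V W : lmodType k) (f : V -> W) x y : is_linear f -> f (x + y) = f x + f y.
Proof. by move=> h; rewrite -{1}[x]scale1r h scale1r. Qed.

Lemma lin0 (V W : lmodType k) (f : V -> W) : is_linear f -> f 0 = 0.
Proof.
move=> h; have E := lin_add 0 0 h; rewrite addr0 in E.
by apply: (addrI (f 0)); rewrite addr0 -E.
Qed.

Lemma linN (V W : lmodType k) (f : V -> W) x : is_linear f -> f (- x) = - f x.
Proof.
move=> h; have := h (-1) x 0; rewrite addr0 lin0 // addr0 !scaleN1r.
by [].
Qed.

Lemma lin_plus (V W : lmodType k) (f g : V -> W) :
  is_linear f -> is_linear g -> is_linear (fun v => f v + g v).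
Proof.
move=> hf hg c x y; rewrite hf hg scalerDr.
by rewrite -!addrA; congr (_ + _); rewrite addrCA.
Qed.

Lemma lin_opp (V W : lmodType k) (f : V -> W) :
  is_linear f -> is_linear (fun v => - f v).
Proof. by move=> hf c x y; rewrite hf opprD scalerN. Qed.

Lemma lin_scale (V W : lmodType k) (f : V -> W) (d : k) :
  is_linear f -> is_linear (fun v => d *: f v).
Proof. by move=> hf c x y; rewrite hf scalerDr !scalerA mulrC. Qed.

Lemma lin_comp (U V W : lmodType k) (f : V -> W) (g : U -> V) :
  is_linear f -> is_linear g -> is_linear (fun v => f (g v)).
Proof. by move=> hf hg c x y; rewrite hg hf. Qed.

Lemma lin_sum (V W : lmodType k) (I : Type) (r : seq I) (P : pred I)
  (F : I -> V -> W) :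
  (forall i, P i -> is_linear (F i)) ->
  is_linear (fun v => \sum_(i <- r | P i) F i v).
Proof.
move=> hF c x y; rewrite scaler_sumr -big_split /=.
by apply: eq_bigr => i Pi; rewrite hF.
Qed.

Lemma lin_iter (V : lmodType k) (f : V -> V) n :
  is_linear f -> is_linear (iter n f).
Proof.
move=> hf; elim: n => [|n IH] c x y //=.
by rewrite IH hf.
Qed.

Lemma lin_id (V : lmodType k) : is_linear (fun v : V => v).
Proof. by []. Qed.

Variables (H N : lmodType k).

Lemma cochain_lin n (f : cochain H N n) a i :
  is_cochain f -> is_linear (fun v => f (upd a i v)).
Proof. by case=> h _; apply: h. Qed.

Definition swap n (a : 'I_n -> H) (p q : 'I_n) : 'I_n -> H :=
  fun l => if l == p then a q else if l == q then a p else a l.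

Lemma swap_lemma n (f : cochain H N n) (p q : 'I_n) :
  (forall a i, is_linear (fun v => f (upd a i v))) ->
  p != q -> (forall a, a p = a q -> f a = 0) ->
  forall a, f (swap a p q) = - f a.
Proof.
move=> hl pq hz a.
pose h x y := f (upd (upd a p x) q y).
have hy x : is_linear (h x) by move=> c y1 y2; apply: hl.
have hx y : is_linear (fun x => h x y).
  move=> c y1 y2; rewrite /h.
  have E z : upd (upd a p z) q y = upd (upd a q y) p z.
    apply: functional_extensionality => l; rewrite /upd.
    case: (eqVneq l q) => [->|lq] /=; last by [].
    by rewrite eq_sym (negbTE pq).
  by rewrite !E; apply: hl.
have Ea : f a = h (a p) (a q).
  rewrite /h; congr f; apply: functional_extensionality => l; rewrite /upd.
  case: (eqVneq l p) => [lp|lp]; case: (eqVneq l q) => [lq|lq] //;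
   by [rewrite -lp -lq eqxx in pq | rewrite lp | rewrite lq].
have Es : f (swap a p q) = h (a q) (a p).
  rewrite /h; congr f; apply: functional_extensionality => l; rewrite /upd /swap.
  case: (eqVneq l p) => [lp|lp]; case: (eqVneq l q) => [lq|lq] //;
   by [rewrite -lp -lq eqxx in pq | rewrite lp | rewrite lq].
have hzz z : h z z = 0.
  apply: hz; rewrite /upd eqxx (negbTE pq) eqxx.
  by [].
have := hzz (a p + a q).
rewrite (lin_add _ _ (hy _)) !(lin_add _ _ (hx _)) !hzz add0r addr0.
by rewrite Ea Es => /eqP; rewrite addr_eq0 => /eqP.
Qed.

Lemma alt_from_adj n (f : cochain H N n) :
  (forall a i, is_linear (fun v => f (upd a i v))) ->
  (forall a (x y : 'I_n), (y : nat) = (x : nat).+1 -> a x = a y -> f a = 0) ->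
  is_cochain f.
Proof.
move=> hl hadj; split => //.
have main d : forall a (i j : 'I_n), (j : nat) = ((i : nat) + d).+1 -> a i = a j -> f a = 0.
  elim: d => [|d IH] a i j hj aij; first by apply: (hadj a i j); rewrite addn0 in hj.
  have hj' : (((i:nat) + d).+1 < n)%N by have := ltn_ord j; lia.
  pose j' := Ordinal hj'.
  have j'j : j' != j by apply/eqP => /(congr1 val) /=; lia.
  have hadj' : forall b, b j' = b j -> f b = 0.
    by move=> b; apply: hadj; rewrite hj /=; lia.
  have := swap_lemma hl j'j hadj' a.
  have ij' : i != j' by apply/eqP => /(congr1 val) /=; lia.
  have ij : i != j by apply/eqP => /(congr1 val) /=; lia.
  rewrite (IH (swap a j' j) i j') //; last by rewrite /swap (negbTE ij') (negbTE ij) eqxx.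
  by move/eqP; rewrite eq_sym oppr_eq0 => /eqP.
move=> a i j ij aij.
case: (ltngtP i j) => [lt|lt|/val_inj eq]; last by rewrite eq eqxx in ij.
- by apply: (main (j - i.+1)%N a i j) => //; lia.
- by apply: (main (i - j.+1)%N a j i) => //; lia.
Qed.
End Gen.

Section L.
Variable k : fieldType.
Variables (H N : lmodType k).

Lemma args_set n (L1 L2 : seq H) v w (h : (size L1 < n)%N) :
  args (n:=n) (L1 ++ v :: L2) = upd (args (n:=n) (L1 ++ w :: L2)) (Ordinal h) v.
Proof.
apply: functional_extensionality => l; rewrite /args /upd !nth_cat.
case: (ltnP l (size L1)) => hl.
  have -> : (l == Ordinal h) = false by apply/eqP => /(congr1 val) /=; lia.
  by [].
case: (eqVneq l (Ordinal h)) => [->|ne] /=; first by rewrite subnn.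
have : (l - size L1 != 0)%N.
  apply/eqP => e; move/eqP: ne; apply; apply: val_inj => /=; lia.
by case: (l - size L1)%N.
Qed.

Lemma map_upd_notin m (s : seq 'I_m) (a : 'I_m -> H) i v :
  i \notin s -> map (upd a i v) s = map a s.
Proof.
move=> hi; apply/eq_in_map => l ls; rewrite /upd.
by case: (eqVneq l i) => [e|] //; move: hi; rewrite -e ls.
Qed.

Lemma args_fill n m (pre : seq H) (s : seq 'I_m) (a : 'I_m -> H) i :
  uniq s -> i \in s -> (size pre + size s = n)%N ->
  exists kk : 'I_n, forall v,
    args (n:=n) (pre ++ map (upd a i v) s) = upd (args (n:=n) (pre ++ map a s)) kk v.
Proof.
move=> us hi hsz; case/splitPr: hi us hsz => p1 p2 us hsz.
have hs : (size (pre ++ map a p1) < n)%N.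
  by rewrite size_cat size_map; rewrite size_cat /= in hsz; lia.
exists (Ordinal hs) => v.
rewrite cat_uniq /= in us; case/and4P: us => _ /norP [n1 _] n2 _.
have e1 : map (upd a i v) p1 = map a p1.
  by apply: map_upd_notin.
have ei : upd a i v i = v by rewrite /upd eqxx.
rewrite !map_cat /= e1 map_upd_notin // ei !catA.
exact: (args_set (L1 := pre ++ map a p1) (map a p2) v (a i) hs).

Qed.

Lemma args_two_zero n m (f : cochain H N n) (pre : seq H) (s : seq 'I_m)
   (a : 'I_m -> H) (x y : 'I_m) :
  is_cochain f -> uniq s -> x \in s -> y \in s -> x != y -> a x = a y ->
  (size pre + size s = n)%N -> f (args (n:=n) (pre ++ map a s)) = 0.
Proof.
move=> [_ alt] us xs ys xy axy hsz.
have hx : (size pre + index x s < n)%N by rewrite -hsz ltn_add2l index_mem.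
have hy : (size pre + index y s < n)%N by rewrite -hsz ltn_add2l index_mem.
apply: (alt _ (Ordinal hx) (Ordinal hy)).
  apply/eqP => /(congr1 val) /= /eqP; rewrite eqn_add2l => /eqP e.
  by move/eqP: xy; apply; rewrite -(nth_index x xs) e nth_index.
rewrite /args /= !nth_cat !ltnNge !leq_addr /= !addKn.
by rewrite !(nth_map x) ?index_mem // !nth_index.
Qed.

Lemma lin_head n (f : cochain H N n) (L : seq H) :
  is_cochain f -> (size L).+1 = n -> is_linear (fun w => f (args (n:=n) (w :: L))).
Proof.
move=> hf hs.
have h0 : (size (@nil H) < n)%N by rewrite -hs.
have E w : args (n:=n) (w :: L) = upd (args (n:=n) (0 :: L)) (Ordinal h0) w.
  exact: (args_set (L1 := [::]) L w 0 h0).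
move=> c x y; rewrite (E (c *: x + y)) (E x) (E y).
by apply: cochain_lin.
Qed.

Lemma head_zero n (f : cochain H N n) (L : seq H) :
  is_cochain f -> (size L).+1 = n -> f (args (n:=n) (0 :: L)) = 0.
Proof. by move=> hf hs; apply: (lin0 (lin_head hf hs)). Qed.

Lemma enum_split n (x y : 'I_n.+1) : (y : nat) = (x : nat).+1 ->
  exists s1 s3, enum 'I_n.+1 = s1 ++ x :: y :: s3.
Proof.
move=> hxy.
have E : enum 'I_n.+1 = map (@inord n) (iota 0 n.+1).
  rewrite -val_enum_ord -map_comp.
  by rewrite -[LHS]map_id; apply: eq_map => l /=; rewrite inord_val.
have hy := ltn_ord y.
rewrite E.
have -> : iota 0 n.+1 = iota 0 x ++ (x : nat) :: (y : nat) :: iota (y : nat).+1 (n.+1 - (y : nat).+1).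
  rewrite -[in LHS](subnKC (ltnW (ltn_ord x))) iotaD add0n.
  have -> : (n.+1 - x = (n.+1 - y.+1).+2)%N by lia.
  by rewrite /= hxy.
rewrite map_cat /=.
exists (map (@inord n) (iota 0 x)), (map (@inord n) (iota (y : nat).+1 (n.+1 - (y : nat).+1))).
congr (_ ++ _ :: _ :: _); apply: val_inj; rewrite /= inordK //; lia.
Qed.

Lemma adj_filter n (a : 'I_n.+1 -> H) (x y : 'I_n.+1) (P1 P2 : pred 'I_n.+1) :
  (y : nat) = (x : nat).+1 -> a x = a y ->
  P1 x = false -> P1 y = true -> P2 x = true -> P2 y = false ->
  (forall l, l != x -> l != y -> P1 l = P2 l) ->
  [seq a l | l <- enum 'I_n.+1 & P1 l] = [seq a l | l <- enum 'I_n.+1 & P2 l].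
Proof.
move=> hxy axy p1x p1y p2x p2y hP.
have [s1 [s3 E]] := enum_split hxy.
have U := enum_uniq 'I_n.+1; rewrite E cat_uniq /= in U.
case/and5P: U => _ hs1 hx3 hy3 _.
move: hs1; rewrite !negb_or => /and3P [hx1 hy1 _].
move: hx3; rewrite in_cons negb_or => /andP [_ hx3].
rewrite E !filter_cat /= p1x p1y p2x p2y /= !map_cat /=.
have e : forall s, x \notin s -> y \notin s -> filter P1 s = filter P2 s.
  move=> s nx ny; apply: eq_in_filter => l ls; apply: hP.
    by apply/eqP => e; rewrite -e ls in nx.
  by apply/eqP => e; rewrite -e ls in ny.
by rewrite axy e // ?e //.
Qed.

Lemma size_rm1 n (p : 'I_n) : size [seq l <- enum 'I_n | l != p] = n.-1.
Proof.
rewrite (@eq_filter _ _ (predC1 p)) // -rem_filter ?enum_uniq //.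
by rewrite size_rem ?mem_enum // size_enum_ord.
Qed.

Lemma size_rm2 n (p q : 'I_n) : p != q ->
  size [seq l <- enum 'I_n | (l != p) && (l != q)] = n.-2.
Proof.
move=> pq.
rewrite (@eq_filter _ _ [predI predC1 q & predC1 p]); last by move=> l /=; rewrite andbC.
rewrite filter_predI -rem_filter ?enum_uniq // -rem_filter ?rem_uniq ?enum_uniq //.
rewrite size_rem; last by rewrite mem_rem_uniq ?enum_uniq // !inE mem_enum eq_sym pq.
by rewrite size_rem ?mem_enum // size_enum_ord.
Qed.

End L.

Section C.
Variable k : fieldType.
Variables (H N : lmodType k).

Lemma sum_cancel m (F : 'I_m -> N) x y : x != y -> F x + F y = 0 ->
  (forall p, p != x -> p != y -> F p = 0) -> \sum_p F p = 0.
Proof.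
move=> xy hxy h0; rewrite (bigD1 x) //= (bigD1 y) /=; last by rewrite eq_sym.
by rewrite big1 ?addr0 // => p /andP [px py]; apply: h0.
Qed.

Lemma upd_same n (a : 'I_n -> H) i v : upd a i v i = v.
Proof. by rewrite /upd eqxx. Qed.
Lemma upd_diff n (a : 'I_n -> H) i v p : p != i -> upd a i v p = a p.
Proof. by rewrite /upd => /negbTE ->. Qed.

Lemma sgnS (m : nat) : (-1) ^+ m.+1 = - ((-1) ^+ m) :> k.
Proof. by rewrite exprS mulN1r. Qed.

Variables (br : H -> H -> H) (act : H -> N -> N) (n : nat) (f : cochain H N n).
Hypotheses (hbr : is_bilinear br) (hbrz : forall z, br z z = 0)
  (hact : is_bilinear act) (hf : is_cochain f).

Lemma memf1 (x p : 'I_n.+1) : x != p -> x \in [seq l <- enum 'I_n.+1 | l != p].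
Proof. by move=> h; rewrite mem_filter mem_enum h. Qed.
Lemma memf2 (x p q : 'I_n.+1) : x != p -> x != q ->
  x \in [seq l <- enum 'I_n.+1 | (l != p) && (l != q)].
Proof. by move=> h1 h2; rewrite mem_filter mem_enum h1 h2. Qed.
Lemma uniqf (P : pred 'I_n.+1) : uniq [seq l <- enum 'I_n.+1 | P l].
Proof. by rewrite filter_uniq ?enum_uniq. Qed.

Lemma act_part_zero (a : 'I_n.+1 -> H) (x y : 'I_n.+1) :
  (y : nat) = (x : nat).+1 -> a x = a y ->
  \sum_(i < n.+1) (-1) ^+ i *:
      act (a i) (f (args (n:=n) [seq a l | l <- enum 'I_n.+1 & l != i])) = 0.
Proof.
move=> hxy axy.
have xy : x != y by apply/eqP => /(congr1 val) /=; lia.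
apply: (sum_cancel xy).
  rewrite (@adj_filter _ _ _ a x y (fun l => l != x) (fun l => l != y)) //=;
    try by [rewrite ?eqxx // eq_sym xy | rewrite ?eqxx // xy | move=> l -> ->].
  by rewrite -axy hxy sgnS scaleNr addrN.
move=> p px py.
have hx : x \in [seq l <- enum 'I_n.+1 | l != p] by apply: memf1; rewrite eq_sym.
have hy : y \in [seq l <- enum 'I_n.+1 | l != p] by apply: memf1; rewrite eq_sym.
rewrite (args_two_zero (pre := [::]) hf (uniqf _) hx hy xy axy); last by rewrite size_rm1.
by rewrite (lin0 (hact.2 _)) scaler0.
Qed.
Lemma dbl_part_zero (a : 'I_n.+1 -> H) (x y : 'I_n.+1) :
  (y : nat) = (x : nat).+1 -> a x = a y ->
  \sum_(i < n.+1) \sum_(j < n.+1 | (i < j)%N) (-1) ^+ (i + j) *: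
      f (args (n:=n) (br (a i) (a j) ::
                 [seq a l | l <- enum 'I_n.+1 & (l != i) && (l != j)])) = 0.
Proof.
move=> hxy axy.
have xy : x != y by apply/eqP => /(congr1 val) /=; lia.
have yx : y != x by rewrite eq_sym.
have n0 : (0 < n)%N by have := ltn_ord y; lia.
have Z : forall p q : 'I_n.+1, (p < q)%N -> p != x -> p != y -> q != x -> q != y ->
    f (args (n:=n) (br (a p) (a q) ::
                 [seq a l | l <- enum 'I_n.+1 & (l != p) && (l != q)])) = 0.
  move=> p q pq px py qx qy.
  have pq' : p != q by apply/eqP => e; rewrite e ltnn in pq.
  have hx : x \in [seq l <- enum 'I_n.+1 | (l != p) && (l != q)] by apply: memf2; rewrite eq_sym.
  have hy : y \in [seq l <- enum 'I_n.+1 | (l != p) && (l != q)] by apply: memf2; rewrite eq_sym.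
  apply: (args_two_zero (pre := [:: br (a p) (a q)]) hf (uniqf _) hx hy xy axy).
  by rewrite /= size_rm2 //; lia.
have nat_ne : forall p q : 'I_n.+1, p != q -> (p : nat) <> q.
  by move=> p q /eqP h e; apply: h; apply: val_inj.
apply: (sum_cancel xy).
- rewrite /= [X in X + _]big_mkcond [X in _ + X]big_mkcond -big_split /=; apply: big1 => q _.
  case: (eqVneq q x) => [->|qx].
    by rewrite ltnn (_ : (y < x)%N = false) ?addr0 //; lia.
  case: (eqVneq q y) => [->|qy].
    rewrite ltnn (_ : (x < y)%N = true) ?addr0; last by lia.
    rewrite -axy hbrz head_zero ?scaler0 // size_map size_rm2 //; lia.
  have xq : x != q by rewrite eq_sym.
  have yq : y != q by rewrite eq_sym.
  have := nat_ne _ _ qx; have := nat_ne _ _ qy => qy' qx'.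
  case: (ltnP x q) => hxq.
    rewrite (_ : (y < q)%N = true); last by lia.
    rewrite axy (@adj_filter _ _ _ a x y (fun l => (l != x) && (l != q))
                   (fun l => (l != y) && (l != q))) //=;
      try by [rewrite ?eqxx ?xy ?yx ?xq ?yq | move=> l -> ->].
    by rewrite hxy addSn sgnS scaleNr addrN.
  by rewrite (_ : (y < q)%N = false) ?addr0 //; lia.
- move=> p px py.
  have := nat_ne _ _ px; have := nat_ne _ _ py => py' px'.
  have xp : x != p by rewrite eq_sym.
  have yp : y != p by rewrite eq_sym.
  rewrite big_mkcond; apply: (sum_cancel xy).
    case: (ltnP p x) => hpx.
      rewrite (_ : (p < y)%N = true); last by lia.
      rewrite -axy (@adj_filter _ _ _ a x y (fun l => (l != p) && (l != x))
                   (fun l => (l != p) && (l != y))) //=;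
        try by [rewrite ?eqxx ?xy ?yx ?xp ?yp ?andbF | move=> l -> ->].
      by rewrite hxy addnS sgnS scaleNr addrN.
    by rewrite /= (_ : (p < y)%N = false) ?addr0 //; lia.
  move=> q qx qy; case: ifP => // hpq.
  by rewrite Z ?scaler0.
Qed.

Lemma dLie_cochain : is_cochain (dLie br act f).
Proof.
apply: alt_from_adj.
  move=> a i; rewrite /dLie; apply: lin_plus.
    apply: lin_sum => p _; apply: lin_scale.
    case: (eqVneq p i) => [->|pi].
      have ni : i \notin [seq l <- enum 'I_n.+1 | l != i] by rewrite mem_filter eqxx.
      move=> c v w; rewrite !upd_same !(map_upd_notin _ _ ni).
      by apply: hact.1.
    have hi : i \in [seq l <- enum 'I_n.+1 | l != p] by apply: memf1; rewrite eq_sym.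
    have [kk E] := args_fill (pre := [::]) a (uniqf _) hi (size_rm1 p).
    move=> c v w; rewrite !upd_diff // !E.
    exact: (lin_comp (hact.2 (a p)) (cochain_lin _ _ hf)).
  apply: lin_sum => p _; apply: lin_sum => q pq; apply: lin_scale.
  have pq' : p != q by apply/eqP => e; rewrite e ltnn in pq.
  have n0 : (0 < n)%N by have := ltn_ord q; lia.
  have sz : (size [seq a l | l <- enum 'I_n.+1 & (l != p) && (l != q)]).+1 = n.
    by rewrite size_map size_rm2 //; lia.
  case: (eqVneq p i) => [ep|pi].
    subst p.
    have ni : i \notin [seq l <- enum 'I_n.+1 | (l != i) && (l != q)] by rewrite mem_filter eqxx.
    move=> c v w; rewrite !upd_same !upd_diff ?(eq_sym q) // !(map_upd_notin _ _ ni).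
    exact: (lin_comp (lin_head hf sz) (hbr.1 (a q))).
  case: (eqVneq q i) => [eq|qi].
    subst q.
    have ni : i \notin [seq l <- enum 'I_n.+1 | (l != p) && (l != i)] by rewrite mem_filter eqxx andbF.
    move=> c v w; rewrite !upd_same !upd_diff // !(map_upd_notin _ _ ni).
    exact: (lin_comp (lin_head hf sz) (hbr.2 (a p))).
  have hi : i \in [seq l <- enum 'I_n.+1 | (l != p) && (l != q)] by apply: memf2; rewrite eq_sym.
  have sz' : (size [:: br (a p) (a q)] + size [seq l <- enum 'I_n.+1 | (l != p) && (l != q)] = n)%N.
    by rewrite /= size_rm2 //; lia.
  have [kk E] := args_fill (pre := [:: br (a p) (a q)]) a (uniqf _) hi sz'.
  move=> c v w; rewrite !(upd_diff _ _ pi) !(upd_diff _ _ qi) !E.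
  exact: (cochain_lin _ _ hf).
move=> a x y hxy axy; rewrite /dLie.
by rewrite (act_part_zero hxy axy) (dbl_part_zero hxy axy) addr0.
Qed.
End C.

Section D.
Variable k : fieldType.
Hypothesis char0 : [pchar k] =i pred0.
Variables (H N : lmodType k).

Lemma two_zero (x : N) : x + x = 0 -> x = 0.
Proof.
move=> h.
have := (pcharf0P k).1 char0 2; rewrite /= mulr2n => h2.
have : (1 + 1) *: x = 0 by rewrite scalerDl scale1r.
by move/eqP; rewrite scaler_eq0 h2 /= => /eqP.
Qed.

Lemma cochain_plus n (f g : cochain H N n) :
  is_cochain f -> is_cochain g -> is_cochain (fun a => f a + g a).
Proof.
move=> [lf af] [lg ag]; split.
  by move=> a i; apply: lin_plus; [apply: lf | apply: lg].
by move=> a i j ij aij; rewrite (af a i j) // (ag a i j) // addr0.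
Qed.

Lemma cochain_opp n (f : cochain H N n) :
  is_cochain f -> is_cochain (fun a => - f a).
Proof.
move=> [lf af]; split.
  by move=> a i; apply: lin_opp; apply: lf.
by move=> a i j ij aij; rewrite (af a i j) // oppr0.
Qed.

Lemma cochain_comp n (f : cochain H N n) (h : N -> N) :
  is_linear h -> is_cochain f -> is_cochain (fun a => h (f a)).
Proof.
move=> hh [lf af]; split.
  by move=> a i; apply: lin_comp => //; apply: lf.
by move=> a i j ij aij; rewrite (af a i j) // lin0.
Qed.

Definition tr n (i j : 'I_n) (l : 'I_n) := if l == i then j else if l == j then i else l.

Lemma trK n (i j : 'I_n) : involutive (tr i j).
Proof.
move=> l; rewrite /tr.
case: (eqVneq l i) => [->|li].
  by rewrite eqxx; case: (eqVneq j i) => [->|ji] //; rewrite eqxx.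
case: (eqVneq l j) => [->|lj]; first by rewrite eqxx.
by rewrite (negbTE li) (negbTE lj).
Qed.

Lemma PsiN_cochain (P : H -> H) (PN : N -> N) n (f : cochain H N n) :
  is_linear P -> is_linear PN -> is_cochain f -> is_cochain (PsiN P PN f).
Proof.
move=> hP hPN hf; split.
  move=> a i; rewrite /PsiN; apply: lin_sum => S _; apply: lin_scale.
  apply: lin_comp; first exact: lin_iter.
  pose b := fun l => if l \in S then P (a l) else a l.
  have E v : (fun l => if l \in S then P (upd a i v l) else upd a i v l) =
             upd b i (if i \in S then P v else v).
    apply: functional_extensionality => l; rewrite /upd /b.
    by case: (eqVneq l i) => [->|].
  move=> c x y; rewrite !E.
  case: (i \in S).
    by rewrite hP; apply: cochain_lin.
  by apply: cochain_lin.
move=> a i j ij aij; rewrite /PsiN.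
pose T := fun S : {set 'I_n} => (-1) ^+ (n - #|S|) *: iter (n - #|S|) PN (f (fun l => if l \in S then P (a l) else a l)).
suff : \sum_S T S = 0 by [].
pose sg := fun S : {set 'I_n} => tr i j @^-1: S.
have sgK : involutive sg.
  by move=> S; apply/setP => l; rewrite !inE trK.
have Tsg S : T (sg S) = - T S.
  rewrite /T /sg card_preimset; last exact: (can_inj (trK i j)).
  rewrite -scalerN -linN; last exact: lin_iter.
  congr (_ *: iter _ _ _).
  pose b := fun l => if l \in S then P (a l) else a l.
  have -> : (fun l => if l \in tr i j @^-1: S then P (a l) else a l) = swap b i j.
    apply: functional_extensionality => l; rewrite /swap /b inE /tr.
    case: (eqVneq l i) => [->|li]; first by rewrite aij.
    case: (eqVneq l j) => [->|lj]; first by rewrite aij.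
    by [].
  apply: swap_lemma => //; first by move=> c v; apply: cochain_lin.
  by move=> c; case: hf => _ alt; apply: alt.
apply: two_zero.
rewrite {2}(reindex_inj (can_inj sgK)) /=.
rewrite -big_split /=; apply: big1 => S _.
by rewrite Tsg addrN.
Qed.
End D.

Section E.
Variable k : fieldType.
Variables (G M : lmodType k).

Lemma args_fst n (L : seq (G * M)) :
  (fun i => (args (n:=n) L i).1) = args (n:=n) (map fst L).
Proof.
apply: functional_extensionality => i; rewrite /args.
case: (ltnP i (size L)) => h; first by rewrite (nth_map 0).
by rewrite !nth_default ?size_map.
Qed.

Lemma fst_sum (I : Type) (r : seq I) (P : pred I) (F : I -> G * M) :
  (\sum_(i <- r | P i) F i).1 = \sum_(i <- r | P i) (F i).1.
Proof.
elim: r => [|x r IH]; first by rewrite !big_nil.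
by rewrite !big_cons; case: (P x) => //=; rewrite IH.
Qed.

Lemma snd_sum (I : Type) (r : seq I) (P : pred I) (F : I -> G * M) :
  (\sum_(i <- r | P i) F i).2 = \sum_(i <- r | P i) (F i).2.
Proof.
elim: r => [|x r IH]; first by rewrite !big_nil.
by rewrite !big_cons; case: (P x) => //=; rewrite IH.
Qed.

Lemma iota_dLie (BR : G * M -> G * M -> G * M) (ACT : G * M -> G * M -> G * M)
  (br : G -> G -> G) (act : G -> M -> M) n (f : cochain G M n) :
  (forall u v, (BR u v).1 = br u.1 v.1) ->
  (forall u y, ACT u (0, y) = (0, act u.1 y)) ->
  forall a, dLie BR ACT (iota_c f) a = (0, dLie br act f (fun i => (a i).1)).
Proof.
move=> hB hA a; apply: injective_projections => /=.
  rewrite /dLie /iota_c /= !fst_sum big1 ?add0r; last by move=> p _; rewrite /= hA /= scaler0.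
  rewrite big1 // => p _; rewrite fst_sum big1 // => q _.
  by rewrite /= scaler0.
rewrite /dLie /iota_c /= !snd_sum; congr (_ + _).
  apply: eq_bigr => p _; rewrite /= hA /= args_fst -map_comp.
  by [].
apply: eq_bigr => p _; rewrite snd_sum; apply: eq_bigr => q _.
by rewrite /= args_fst /= hB -map_comp.
Qed.

Lemma iter_pair (P : G -> G) (PM : M -> M) m y :
  is_linear P -> iter m (sd_P P PM) ((0 : G), y) = (0, iter m PM y).
Proof.
move=> hP; elim: m => [|m IH] //=.
by rewrite IH /sd_P /= lin0.
Qed.

Lemma iota_PsiN (P : G -> G) (PM : M -> M) n (f : cochain G M n) :
  is_linear P ->
  forall a, PsiN (sd_P P PM) (sd_P P PM) (iota_c f) a =
            (0, PsiN P PM f (fun i => (a i).1)).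
Proof.
move=> hP a; rewrite /PsiN /iota_c; apply: injective_projections => /=.
  by rewrite fst_sum big1 // => S _; rewrite /= iter_pair //= scaler0.
rewrite snd_sum; apply: eq_bigr => S _; rewrite /= iter_pair //=.
congr (_ *: iter _ _ (f _)).
apply: functional_extensionality => i.
by case: (i \in S).
Qed.
End E.

Unset Implicit Arguments.
Set Strict Implicit.
Theorem proposition6p5 (k : fieldType) (char0 : [pchar k] =i pred0)
  (G M : lmodType k) (br : G -> G -> G) (act : G -> M -> M)
  (P : G -> G) (PM : M -> M) :
  is_Lie br -> is_rep br act -> is_Nijenhuis br P ->
  is_Nijenhuis_rep act P PM ->
  (forall f : cochain G M 0, is_cochain f ->
     exists (f' : cochain G M 1) (g' : cochain G M 0),
       [/\ is_cochain f', is_cochain g',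
           iota_c f' = (dNjL0 (sd_br br act) (sd_P P PM) (sd_br br act)
                          (sd_P P PM) (iota_c f)).1 &
           iota_c g' = (dNjL0 (sd_br br act) (sd_P P PM) (sd_br br act)
                          (sd_P P PM) (iota_c f)).2]) /\
  (forall m (f : cochain G M m.+1) (g : cochain G M m),
     is_cochain f -> is_cochain g ->
     exists (f' : cochain G M m.+2) (g' : cochain G M m.+1),
       [/\ is_cochain f', is_cochain g',
           iota_c f' = (dNjLS (sd_br br act) (sd_P P PM) (sd_br br act)
                          (sd_P P PM) (iota_c f, iota_c g)).1 &
           iota_c g' = (dNjLS (sd_br br act) (sd_P P PM) (sd_br br act)
                          (sd_P P PM) (iota_c f, iota_c g)).2]).
Proof.
move=> [hbr hbrz _] [hact _] [hP _] [hPM _].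
have hA : forall u y, sd_br br act u (0, y) = (0, act u.1 y).
  move=> u y; rewrite /sd_br /=.
  by rewrite (lin0 (hbr.2 _)) (lin0 (hact.1 _)) subr0.
have hA' : forall u y, (fun u x => sd_br br act (sd_P P PM u) x) u (0, y) =
                       (0, (fun a x => act (P a) x) u.1 y).
  by move=> u y; rewrite /= hA.
have hB : forall u v, (sd_br br act u v).1 = br u.1 v.1 by [].
have hB' : forall u v, (brP (sd_br br act) (sd_P P PM) u v).1 = brP br P u.1 v.1 by [].
have anti : forall u v, br u v = - br v u.
  move=> u v; have := hbrz (u + v).
  rewrite (lin_add _ _ (hbr.1 _)) !(lin_add _ _ (hbr.2 _)) !hbrz add0r addr0.
  by move/eqP; rewrite addr_eq0 => /eqP.
have hbrP : is_bilinear (brP br P).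
  split.
    move=> y; rewrite /brP; apply: lin_plus; first apply: lin_plus.
    - exact: (lin_comp (hbr.1 y) hP).
    - exact: (hbr.1 (P y)).
    - apply: lin_opp; exact: (lin_comp hP (hbr.1 y)).
  move=> x; rewrite /brP; apply: lin_plus; first apply: lin_plus.
  - exact: (hbr.2 (P x)).
  - exact: (lin_comp (hbr.2 x) hP).
  - apply: lin_opp; exact: (lin_comp hP (hbr.2 x)).
have hbrPz : forall z, brP br P z z = 0.
  by move=> z; rewrite /brP hbrz (lin0 hP) subr0 [br z _]anti addrN.
have hactP : is_bilinear (fun a x => act (P a) x).
  split; first by move=> y; exact: (lin_comp (hact.1 y) hP).
  by move=> x; exact: (hact.2 (P x)).
have hbrL : is_bilinear br := hbr.
split.
  move=> f hf.
  exists (dLie br act f), (fun b => - PsiN P PM f b); split.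
  - exact: dLie_cochain.
  - by apply: cochain_opp; apply: PsiN_cochain.
  - apply: functional_extensionality => a; rewrite /iota_c /dNjL0 /=.
    by rewrite (iota_dLie f hB hA).
  - apply: functional_extensionality => a; rewrite /dNjL0 /=.
    rewrite (iota_PsiN PM f hP); apply: injective_projections => /=; last by [].
    by rewrite oppr0.
move=> m f g hf hg.
exists (dLie br act f), (fun b => - PsiN P PM f b - dNjO br P act PM g b); split.
- exact: dLie_cochain.
- apply: cochain_plus; first by apply: cochain_opp; apply: PsiN_cochain.
  apply: cochain_opp; rewrite /dNjO /dpartial.
  apply: cochain_plus; first apply: cochain_opp.
    by apply: cochain_comp => //; apply: dLie_cochain.
  exact: dLie_cochain.
- apply: functional_extensionality => a; rewrite /iota_c /dNjLS /=.
  by rewrite (iota_dLie f hB hA).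
- apply: functional_extensionality => a; rewrite /dNjLS /dNjO /dpartial /=.
  rewrite (iota_PsiN PM f hP) (iota_dLie g hB hA) (@iota_dLie k G M (brP (sd_br br act) (sd_P P PM)) (fun u x => sd_br br act (sd_P P PM u) x) (brP br P) (fun a x => act (P a) x) m g hB' hA').
  apply: injective_projections => /=; last by [].
  by rewrite (lin0 hP) !oppr0 !addr0 subr0.
Qed.
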